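(* Let $p \ge 2$, let $\beta_0,\beta_1,\dots,\beta_p \in \mathbb{R}$ with $\beta_j \neq 0$ for all $j\in\{1,\dots,p\}$, and consider the linear classifier $f:\mathbb{R}^p\to\{0,1\}$, $f(\boldsymbol{x}) = \mathbf{1}\big[\beta_0 + \sum_{j=1}^p \beta_j x_j > 0\big]$. Let $\tilde{\boldsymbol{x}}\in\mathbb{R}^p$ be a reference point with $f(\tilde{\boldsymbol{x}})=0$, and let $g^{\mathrm{ref}}(\boldsymbol{\beta}) = \beta_0 + \sum_{j=1}^p \beta_j \tilde{x}_j$ be the raw score at the reference. Then for every $k\in\{2,3,\dots,p\}$, the volume (Lebesgue measure) $V_k$ of the region $\{\boldsymbol{x}\in\mathbb{R}^p : f(\boldsymbol{x})=1,\ \mathrm{SEV}^+(\boldsymbol{x}) = k\}$ satisfies $$V_k = c_k \cdot \prod_{j=1}^p \left| \frac{g^{\mathrm{ref}}(\boldsymbol{\beta})}{\beta_j}\right|,$$ where $c_k$ is a finite constant that does not depend on $\beta_0,\beta_1,\dots,\beta_p$.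
   Context: For a classifier $f:\mathbb{R}^p\to\{0,1\}$, a reference $\tilde{\boldsymbol{x}}\in\mathbb{R}^p$ and a query $\boldsymbol{x}$ with $f(\boldsymbol{x})=1$, each Boolean vector $\boldsymbol{b}\in\{0,1\}^p$ determines the point $\boldsymbol{x}_{\boldsymbol{b}} := \boldsymbol{b}\odot \boldsymbol{x} + (\mathbf{1}-\boldsymbol{b})\odot\tilde{\boldsymbol{x}}$ (coordinate $j$ equals $x_j$ if $b_j=1$ and $\tilde{x}_j$ if $b_j=0$; $\odot$ is the coordinatewise product). The Sparse Explanation Value Plus of the query is $\mathrm{SEV}^+(\boldsymbol{x}) := \min\{\|\boldsymbol{b}\|_0 : \boldsymbol{b}\in\{0,1\}^p,\ f(\boldsymbol{x}_{\boldsymbol{b}})=1\}$, i.e. the minimum number of coordinates of the reference that must be replaced by the query's values to obtain a positive prediction. *)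

(* Defs.v *)
From HB Require Import structures.
From mathcomp Require Import all_boot all_order all_algebra.
From mathcomp Require Import all_classical reals ereal sequences.
Set Implicit Arguments. Unset Strict Implicit. Unset Printing Implicit Defensive.
Import Order.TTheory GRing.Theory Num.Theory.
Local Open Scope classical_set_scope.
Local Open Scope ring_scope.

Section defs.
Variable R : realType.
Variable p : nat.

Definition lin_score (b0 : R) (b : 'rV[R]_p) (x : 'rV[R]_p) : R :=
  b0 + \sum_(j < p) b 0 j * x 0 j.

Definition linclf (b0 : R) (b : 'rV[R]_p) (x : 'rV[R]_p) : bool :=
  0 < lin_score b0 b x.

Definition mixpt (bv : {ffun 'I_p -> bool}) (x xref : 'rV[R]_p) : 'rV[R]_p :=
  \row_(j < p) (if bv j then x 0 j else xref 0 j).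

Definition l0 (bv : {ffun 'I_p -> bool}) : nat := #|[set j | bv j]|.

(* SEV^+(x) = min { ||b||_0 : f(x_b) = 1 }; the default value p.+1 is only
   returned when no such b exists, which never happens when f x = 1 *)
Definition sev_plus (f : 'rV[R]_p -> bool) (xref x : 'rV[R]_p) : nat :=
  \big[minn/p.+1]_(bv : {ffun 'I_p -> bool} | f (mixpt bv x xref)) l0 bv.

Definition box (a c : 'rV[R]_p) : set 'rV[R]_p :=
  [set x | forall j, a 0 j <= x 0 j < c 0 j].

Definition boxvol (a c : 'rV[R]_p) : R := \prod_(j < p) (c 0 j - a 0 j).

Definition lebesgue_outer (S : set 'rV[R]_p) : \bar R :=
  ereal_inf [set s | exists (A C : nat -> 'rV[R]_p),
    [/\ forall n j, A n 0 j <= C n 0 j,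
        S `<=` \bigcup_n box (A n) (C n) &
        s = (\sum_(n <oo) (boxvol (A n) (C n))%:E)%E]].

End defs.

(* Main.v *)
Require Import Defs.
From HB Require Import structures.
From mathcomp Require Import all_boot all_order all_algebra.
From mathcomp Require Import all_classical reals ereal sequences.
From mathcomp Require Import ring lra.
Import Order.TTheory GRing.Theory Num.Theory.
Local Open Scope classical_set_scope.
Local Open Scope ring_scope.

Section aux.
Variable R : realType.
Variable p : nat.

Lemma out_ge0 (S : set 'rV[R]_p) : (0 <= lebesgue_outer S)%E.
Proof.
apply: le_ereal_inf_tmp => _ [A [C [hAC _ ->]]].
apply: nneseries_ge0 => n _ _; rewrite lee_fin /boxvol.
by apply: prodr_ge0 => j _; rewrite subr_ge0.
Qed.

Lemma out_le (S : set 'rV[R]_p) (A C : nat -> 'rV[R]_p) :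
  (forall n j, A n 0 j <= C n 0 j) -> S `<=` \bigcup_n box (A n) (C n) ->
  (lebesgue_outer S <= \sum_(n <oo) (boxvol (A n) (C n))%:E)%E.
Proof.
move=> h1 h2; apply: ereal_inf_lbound; exists A, C; split => //.
Qed.

Lemma pow_bound (d : R) (n : nat) : 0 <= d <= 1 -> (1 + d) ^+ n <= 1 + (2 ^+ n - 1) * d.
Proof.
move=> /andP[d0 d1]; elim: n => [|n IH]; first by rewrite !expr0 subrr mul0r addr0.
rewrite exprS exprS.
have h2 : 1 <= 2 ^+ n :> R by rewrite exprn_ege1 // ler1n.
have h3 : 0 <= (1 + d) by lra.
apply: le_trans (ler_wpM2l h3 IH) _.
set K := 2 ^+ n in h2 *.
have h4 : 0 <= (K - 1) * d * (1 - d) by apply: mulr_ge0; [apply: mulr_ge0; lra | lra].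
nra.
Qed.

Lemma real_lim (z q M : R) : 0 <= M -> (forall e, 0 < e -> e <= 1 -> z <= q + e * M) -> z <= q.
Proof.
move=> M0 h; apply/ler_addgt0Pr => e' e'0.
set e := e' / (M + 1 + e').
have hpos : 0 < M + 1 + e' by lra.
have e0 : 0 < e by rewrite divr_gt0.
have e1 : e <= 1 by rewrite ler_pdivrMr // mul1r; lra.
apply: le_trans (h e e0 e1) _; rewrite lerD2l.
rewrite /e mulrAC ler_pdivrMr //; nra.
Qed.

End aux.

Section aff.
Variable R : realType.
Variable p : nat.
Variables a s : 'rV[R]_p.
Hypothesis hs : forall j, s 0 j != 0.

Definition aff (u : 'rV[R]_p) : 'rV[R]_p := \row_j (a 0 j + s 0 j * u 0 j).
Definition Aimg (A C : 'rV[R]_p) : 'rV[R]_p :=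
  \row_j (a 0 j + (if 0 < s 0 j then s 0 j * A 0 j else s 0 j * C 0 j)).
Definition Cimg (d : R) (A C : 'rV[R]_p) : 'rV[R]_p :=
  \row_j (a 0 j + (if 0 < s 0 j then s 0 j * C 0 j else s 0 j * A 0 j)
     + d * `|s 0 j| * (C 0 j - A 0 j)).

Lemma img_len d (A C : 'rV[R]_p) j : A 0 j <= C 0 j ->
  Cimg d A C 0 j - Aimg A C 0 j = (1 + d) * (`|s 0 j| * (C 0 j - A 0 j)).
Proof.
move=> hAC; rewrite !mxE; have := hs j; case: ifP => hp hn.
  rewrite gtr0_norm //; ring.
have hn' : s 0 j < 0 by rewrite lt_neqAle hn /= leNgt hp.
rewrite ltr0_norm //; ring.
Qed.

Lemma img_le d (A C : 'rV[R]_p) j : 0 < d -> A 0 j <= C 0 j -> Aimg A C 0 j <= Cimg d A C 0 j.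
Proof.
move=> d0 hAC; rewrite -subr_ge0 img_len //.
apply: mulr_ge0; first lra.
by apply: mulr_ge0; rewrite ?normr_ge0 ?subr_ge0.
Qed.

Lemma img_vol d (A C : 'rV[R]_p) : (forall j, A 0 j <= C 0 j) ->
  boxvol (Aimg A C) (Cimg d A C) = (1 + d) ^+ p * (\prod_(j < p) `|s 0 j|) * boxvol A C.
Proof.
move=> hAC; rewrite /boxvol (eq_bigr _ (fun j _ => img_len d A C j (hAC j))).
by rewrite big_split /= big_split /= prodr_const card_ord mulrA.
Qed.

Lemma img_box d (A C u : 'rV[R]_p) : 0 < d -> box A C u -> box (Aimg A C) (Cimg d A C) (aff u).
Proof.
move=> d0 hb j; have /andP[h1 h2] := hb j.
rewrite !mxE; have := hs j; case: ifP => hp hn.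
  apply/andP; split.
    by rewrite lerD2l ler_pM2l.
  have : 0 < d * `|s 0 j| * (C 0 j - A 0 j).
    by rewrite !mulr_gt0 ?normr_gt0 // subr_gt0; apply: (le_lt_trans h1 h2).
  have : s 0 j * u 0 j < s 0 j * C 0 j by rewrite ltr_pM2l.
  lra.
have hn' : s 0 j < 0 by rewrite lt_neqAle hn /= leNgt hp.
apply/andP; split.
  by rewrite lerD2l ler_nM2l //; apply: ltW.
have : 0 < d * `|s 0 j| * (C 0 j - A 0 j).
  by rewrite !mulr_gt0 ?normr_gt0 // subr_gt0; apply: (le_lt_trans h1 h2).
have : s 0 j * A 0 j >= s 0 j * u 0 j by rewrite ler_nM2l.
lra.
Qed.

Lemma aff_step (S : set 'rV[R]_p) (A C : nat -> 'rV[R]_p) d :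
  0 < d -> (forall n j, A n 0 j <= C n 0 j) -> S `<=` \bigcup_n box (A n) (C n) ->
  (lebesgue_outer (aff @` S) <=
    ((1 + d) ^+ p * (\prod_(j < p) `|s 0 j|))%:E * \sum_(n <oo) (boxvol (A n) (C n))%:E)%E.
Proof.
move=> d0 hAC hS.
apply: le_trans (@out_le R p (aff @` S) (fun n => Aimg (A n) (C n)) (fun n => Cimg d (A n) (C n)) _ _) _.
- by move=> n j; apply: img_le.
- move=> _ [u Su <-]; have [n _ hn] := hS u Su; exists n => //.
  exact: img_box.
rewrite -nneseriesZl; last first.
  by move=> i _; rewrite lee_fin /boxvol; apply: prodr_ge0 => j _; rewrite subr_ge0.
rewrite le_eqVlt; apply/orP; left; apply/eqP.
congr (limn _); apply/funext => N; apply: eq_bigr => n _.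
by rewrite img_vol.
Qed.

End aff.

Section aff2.
Variable R : realType.
Variable p : nat.
Variables a s : 'rV[R]_p.
Hypothesis hs : forall j, s 0 j != 0.

Lemma aff_le (S : set 'rV[R]_p) :
  (lebesgue_outer (@aff R p a s @` S) <= (\prod_(j < p) `|s 0 j|)%:E * lebesgue_outer S)%E.
Proof.
set P := \prod_(j < p) `|s 0 j|.
have P0 : 0 < P by apply: prodr_gt0 => j _; rewrite normr_gt0.
set y := lebesgue_outer _.
have y0 : (0 <= y)%E by apply: out_ge0.
have := @out_ge0 R p S; case E: (lebesgue_outer S) => [r| |] // r0.
- rewrite lee_fin in r0.
  set K := (2 ^+ p - 1 : R).
  have K0 : 0 <= K by rewrite subr_ge0 exprn_ege1 // ler1n.
  set M := P * (1 + K * r + K).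
  have M0 : 0 <= M by apply: mulr_ge0; [lra | nra].
  have key : forall e, 0 < e -> e <= 1 -> (y <= (P * r + e * M)%:E)%E.
    move=> e e0 e1.
    have : (lebesgue_outer S < (r + e)%:E)%E by rewrite E lte_fin ltrDl.
    rewrite /lebesgue_outer.
    move=> /ereal_inf_lt [_ [A [C [hAC hS ->]]]] hlt.
    have hy := @aff_step R p a s hs S A C e e0 hAC hS.
    have ser0 : (0 <= \sum_(n <oo) (boxvol (A n) (C n))%:E)%E.
      apply: nneseries_ge0 => n _ _; rewrite lee_fin /boxvol.
      by apply: prodr_ge0 => j _; rewrite subr_ge0.
    move: ser0 hy hlt; case: (\sum_(n <oo) _)%E => [t||] //.
    rewrite lee_fin lte_fin => t0 hy hlt.
    apply: le_trans hy _; rewrite -EFinM lee_fin.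
    have hb := @pow_bound R e p.
    have hb' : (1 + e) ^+ p <= 1 + K * e by apply: hb; lra.
    have h1 : (1 + e) ^+ p * P * t <= (1 + K * e) * P * t.
      by apply: ler_wpM2r => //; apply: ler_wpM2r => //; apply: ltW.
    have h2 : (1 + K * e) * P * t <= (1 + K * e) * P * (r + e).
      apply: ler_wpM2l; last by lra.
      apply: mulr_ge0; last by apply: ltW.
      have : 0 <= K * e by apply: mulr_ge0 => //; apply: ltW.
      lra.
    have h3 : 0 <= K * P * e * (1 - e).
      apply: mulr_ge0; last by lra.
      by apply: mulr_ge0; [apply: mulr_ge0 => //; apply: ltW | apply: ltW].
    apply: le_trans h1 _; apply: le_trans h2 _.
    rewrite /M; nra.
  move: y0; case: y key => [z||] //.
  - move=> key _; rewrite lee_fin; apply: (@real_lim R z (P * r) M M0) => e e0 e1.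
    by rewrite -lee_fin; apply: key.
  - by move=> /(_ 1 ltr01 (lexx _)).
- by rewrite gt0_muley ?lte_fin // leey.
Qed.

End aff2.

Section sev.
Variable R : realType.
Variable p : nat.

Definition single (j : 'I_p) : {ffun 'I_p -> bool} := [ffun i : 'I_p => i == j].

Lemma l0_single j : l0 (single j) = 1%N.
Proof.
rewrite /l0 -(card1 j); apply: eq_card => i.
rewrite unfold_in /in_set /=; apply/asboolP/idP; by rewrite /single ffunE.
Qed.

Lemma sum_single (D : 'I_p -> R) j :
  \sum_(i < p) (if single j i then D i else 0) = D j.
Proof.
rewrite (eq_bigr (fun i => if i == j then D i else 0)) => [|i _]; last by rewrite ffunE.
by rewrite -big_mkcond big_pred1_eq.
Qed.

Lemma bigmin_le (I : finType) (P : pred I) (F : I -> nat) m i0 :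
  P i0 -> (\big[minn/m]_(i | P i) F i <= F i0)%N.
Proof.
move=> hP; rewrite unlock.
have : i0 \in index_enum I by rewrite mem_index_enum.
elim: (index_enum I) => // x r IH; rewrite inE => /orP [/eqP <- | hr] /=.
  by rewrite hP geq_minl.
case: (P x); [exact: leq_trans (geq_minr _ _) (IH hr) | exact: IH hr].
Qed.

Lemma sev_single (f : 'rV[R]_p -> bool) xr x j :
  (2 <= sev_plus f xr x)%N -> ~~ f (mixpt (single j) x xr).
Proof.
move=> h; apply/negP => hf; move: h; rewrite /sev_plus.
move=> /leq_trans /(_ (@bigmin_le _ (fun bv => f (mixpt bv x xr)) (fun bv => l0 bv) p.+1 (single j) hf)); by rewrite l0_single.
Qed.

Lemma mixpt_all (x xr : 'rV[R]_p) : mixpt [ffun=> true] x xr = x.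
Proof. by apply/rowP => j; rewrite !mxE ffunE. Qed.

Lemma score_mix b0 (b x xr : 'rV[R]_p) bv :
  lin_score b0 b (mixpt bv x xr) =
  lin_score b0 b xr + \sum_(j < p) (if bv j then b 0 j * (x 0 j - xr 0 j) else 0).
Proof.
rewrite /lin_score -addrA -big_split; congr (_ + _); apply: eq_bigr => j _.
rewrite !mxE; case: (bv j) => /=; last by rewrite addr0.
by rewrite mulrBr addrC subrK.
Qed.

Definition Fn (u : 'rV[R]_p) : bool := 1 < \sum_(j < p) u 0 j.

Lemma Fn_mix bv (u : 'rV[R]_p) : Fn (mixpt bv u 0) = (1 < \sum_(j < p) (if bv j then u 0 j else 0)).
Proof. by rewrite /Fn; congr (_ < _); apply: eq_bigr => j _; rewrite !mxE. Qed.

Definition Uk (k : nat) : set 'rV[R]_p := [set u | Fn u /\ sev_plus Fn 0 u = k].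

Lemma Uk_box k u : (2 <= k)%N -> Uk k u ->
  box (const_mx (- p%:R)) (const_mx 2) u.
Proof.
move=> hk [hF hs] j; rewrite !mxE.
have hle : forall i, u 0 i <= 1.
  move=> i; have := @sev_single Fn 0 u i; rewrite hs => /(_ hk).
  by rewrite Fn_mix sum_single -leNgt.
apply/andP; split; last by apply: le_lt_trans (hle j) _; rewrite ltr1n.
move: hF; rewrite /Fn (bigD1 j) //=.
have : \sum_(i < p | i != j) u 0 i <= p%:R.
  apply: le_trans (_ : \sum_(i < p | i != j) (1 : R) <= _).
    by apply: ler_sum => i _.
  rewrite sumr_const ler_nat; apply: leq_trans (max_card _) _; rewrite card_ord.
  by [].
lra.
Qed.

End sev.

Section fin.
Variable R : realType.
Variable p : nat.
Hypothesis p0 : (0 < p)%N.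

Lemma series_first (f : nat -> R) :
  (forall n, (1 <= n)%N -> f n = 0) -> (forall n, 0 <= f n) ->
  (\sum_(n <oo) (f n)%:E)%E = (f 0%N)%:E.
Proof.
move=> h0 hge.
rewrite (@nneseries_split R (fun n => (f n)%:E) 0 1); last by move=> k _; rewrite lee_fin.
rewrite eseries0; last by move=> i hi _; rewrite h0.
by rewrite add0n big_nat1 adde0.
Qed.

Lemma boxvol00 : boxvol (0 : 'rV[R]_p) 0 = 0.
Proof.
rewrite /boxvol (eq_bigr (fun _ => 0)) => [|j _]; last by rewrite mxE subrr.
by rewrite prodr_const expr0n card_ord; case: p p0.
Qed.

Lemma out_set0 : lebesgue_outer (set0 : set 'rV[R]_p) = 0%E.
Proof.
apply/le_anti/andP; split; last exact: out_ge0.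
apply: le_trans (@out_le R p set0 (fun _ => 0) (fun _ => 0) _ _) _ => //.
by rewrite (@series_first (fun _ => boxvol 0 0)) ?boxvol00.
Qed.

Lemma Uk_fin k : (2 <= k)%N -> exists c : R, lebesgue_outer (@Uk R p k) = c%:E.
Proof.
move=> hk.
set A0 : 'rV[R]_p := const_mx (- p%:R); set C0 : 'rV[R]_p := const_mx 2.
have hAC : forall n j, (if n == 0%N then A0 else 0) 0 j <= (if n == 0%N then C0 else 0) 0 j.
  move=> n j; case: (n == 0%N); rewrite !mxE //.
  by apply: le_trans (_ : 0 <= 2) => //; rewrite oppr_le0.
have := @out_le R p (@Uk R p k) _ _ hAC.
have -> : (\sum_(n <oo) (boxvol (if n == 0%N then A0 else 0) (if n == 0%N then C0 else 0))%:E)%E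
    = (boxvol A0 C0)%:E.
  rewrite (@series_first (fun n => boxvol (if n == 0%N then A0 else 0) (if n == 0%N then C0 else 0))) //.
    by case => // n _ /=; rewrite boxvol00.
  move=> n; rewrite /boxvol; apply: prodr_ge0 => j _; rewrite subr_ge0; exact: hAC.
move=> /(_ _) hle.
have : (lebesgue_outer (@Uk R p k) <= (boxvol A0 C0)%:E)%E.
  apply: hle => u hu; exists 0%N => //=; exact: (@Uk_box R p k u hk hu).
have := @out_ge0 R p (@Uk R p k); case: (lebesgue_outer _) => [r||] //.
by exists r.
Qed.

End fin.

Theorem theorem4p1 (R : realType) (p k : nat) :
  (2 <= p)%N -> (2 <= k <= p)%N ->
  exists c : R, forall (b0 : R) (b xref : 'rV[R]_p),
    (forall j : 'I_p, b 0 j != 0) ->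
    ~~ linclf b0 b xref ->
    lebesgue_outer
      [set x | linclf b0 b x /\ sev_plus (linclf b0 b) xref x = k] =
    (c * \prod_(j < p) `| lin_score b0 b xref / b 0 j |)%:E.
Proof.
move=> hp /andP[hk _].
have p0 : (0 < p)%N by apply: leq_trans hp.
have [c hc] := @Uk_fin R p p0 k hk.
exists c => b0 b xref hb hg.
set g := lin_score b0 b xref.
have g0 : g <= 0 by rewrite leNgt.
have [gz | gneg] : g = 0 \/ g < 0.
  by move: g0; rewrite le_eqVlt => /orP [/eqP -> | ->]; [left | right].
- have -> : [set x | linclf b0 b x /\ sev_plus (linclf b0 b) xref x = k] = set0.
    apply/seteqP; split => x //= [hx hs].
    have hs2 : (2 <= sev_plus (linclf b0 b) xref x)%N by rewrite hs.
    move: hx; rewrite -(@mixpt_all R p x xref) /linclf score_mix -/g gz add0r.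
    set D := fun j => b 0 j * (x 0 j - xref 0 j).
    case: (boolP [exists j, 0 < D j]) => [/existsP [j hj] _ | /existsPn hn].
      have := @sev_single R p (linclf b0 b) xref x j hs2.
      by rewrite /linclf score_mix -/g gz add0r sum_single hj.
    rewrite (eq_bigr (fun j => D j)) => [|j _]; last by rewrite ffunE.
    rewrite ltNge => /negP; apply; apply: sumr_le0 => j _.
    by rewrite leNgt; apply: hn.
  rewrite (@out_set0 R p p0) (eq_bigr (fun _ => 0)) => [|j _]; last first.
    by rewrite gz mul0r normr0.
  by rewrite prodr_const card_ord expr0n (negbTE (lt0n_neq0 p0)) mulr0.
- have gn0 : g != 0 by rewrite lt_eqF.
  set s : 'rV[R]_p := \row_j (- g / b 0 j).
  set s' : 'rV[R]_p := \row_j (b 0 j / - g).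
  set a' : 'rV[R]_p := \row_j (- (b 0 j * xref 0 j) / - g).
  set T := @aff R p xref s.
  set Ti := @aff R p a' s'.
  have hs : forall j, s 0 j != 0.
    by move=> j; rewrite mxE mulf_neq0 ?invr_eq0 ?oppr_eq0.
  have hs' : forall j, s' 0 j != 0.
    by move=> j; rewrite mxE mulf_neq0 ?invr_eq0 ?oppr_eq0.
  have hTTi : forall x, T (Ti x) = x.
    move=> x; apply/rowP => j; rewrite !mxE.
    have := hb j; move: (b 0 j) (x 0 j) (xref 0 j) => bj xj rj hbj.
    by field; rewrite hbj gn0.
  have hTiT : forall x, Ti (T x) = x.
    move=> x; apply/rowP => j; rewrite !mxE.
    have := hb j; move: (b 0 j) (x 0 j) (xref 0 j) => bj xj rj hbj.
    by field; rewrite hbj gn0.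
  have hmix : forall bv x, linclf b0 b (mixpt bv x xref) = @Fn R p (mixpt bv (Ti x) 0).
    move=> bv x; rewrite /linclf score_mix -/g Fn_mix.
    set S := \sum_(j < p) (if bv j then Ti x 0 j else 0).
    set D := \sum_(j < p) _.
    have -> : D = - g * S.
      rewrite /S /D mulr_sumr; apply: eq_bigr => j _; case: (bv j); last by rewrite mulr0.
      rewrite !mxE; move: (b 0 j) (x 0 j) (xref 0 j) => bj xj rj.
      by field.
    by apply/idP/idP => h; nra.
  have hreg : forall x, [set x | linclf b0 b x /\ sev_plus (linclf b0 b) xref x = k] x <->
      @Uk R p k (Ti x).
    move=> x; rewrite /Uk /=.
    have -> : linclf b0 b x = @Fn R p (Ti x).
      by rewrite -{1}(@mixpt_all R p x xref) hmix (@mixpt_all R p).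
    have -> : sev_plus (linclf b0 b) xref x = sev_plus (@Fn R p) 0 (Ti x).
      by rewrite /sev_plus; apply: eq_bigl => bv; rewrite hmix.
    by [].
  have E1 : [set x | linclf b0 b x /\ sev_plus (linclf b0 b) xref x = k] = T @` @Uk R p k.
    apply/seteqP; split => x.
      by move=> /hreg hx; exists (Ti x) => //.
    by case=> u hu <-; apply/hreg; rewrite hTiT.
  have E2 : @Uk R p k = Ti @` [set x | linclf b0 b x /\ sev_plus (linclf b0 b) xref x = k].
    apply/seteqP; split => u.
      by move=> hu; exists (T u) => //; apply/hreg; rewrite hTiT.
    by case=> x /hreg hx <-.
  set P := \prod_(j < p) `|s 0 j|.
  set P' := \prod_(j < p) `|s' 0 j|.
  have P0 : 0 < P by apply: prodr_gt0 => j _; rewrite normr_gt0.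
  have PP' : P * P' = 1.
    rewrite /P /P' -big_split /=; apply: big1 => j _.
    rewrite -normrM !mxE; have := hb j; move: (b 0 j) => bj hbj.
    have -> : - g / bj * (bj / - g) = 1 by field; rewrite hbj gn0.
    exact: normr1.
  have I1 := @aff_le R p xref s hs (@Uk R p k).
  have I2 := @aff_le R p a' s' hs' [set x | linclf b0 b x /\ sev_plus (linclf b0 b) xref x = k].
  rewrite -E1 hc -/P in I1.
  rewrite -E2 hc -/P' in I2.
  have -> : \prod_(j < p) `|g / b 0 j| = P.
    by apply: eq_bigr => j _; rewrite mxE mulNr normrN.
  move: I1 I2; have := @out_ge0 R p [set x | linclf b0 b x /\ sev_plus (linclf b0 b) xref x = k].
  case: (lebesgue_outer _) => [z||] //.
  move=> z0 I1 I2.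
  rewrite -EFinM lee_fin in I1; rewrite -EFinM lee_fin in I2.
  congr (_%:E); apply/le_anti/andP; split; first by rewrite mulrC.
  rewrite mulrC; apply: le_trans (ler_wpM2l (ltW P0) I2) _.
  by rewrite mulrA PP' mul1r.
Qed.
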